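(* Let $(X,\mathcal T)$ be a spectral space with specialization order $\leq$. Consider the conditions: (i) $X$ is locally with maximum; (ii) $\mathcal T$ equals the Scott topology of $(X,\geq)$, i.e. the topology whose open sets are the subsets $U\subseteq X$ that are down-sets for $\leq$ and such that whenever $D\subseteq X$ is down-directed for $\leq$ with $\inf(D)\in U$, then $D\cap U\neq\emptyset$; (iii) every open quasi-compact subset of $X$ has finitely many maximal elements; (iv) the inverse topology $\mathcal T^\mathrm{inv}$ equals the topology on $X$ having the sets $\{x\}^\downarrow=\{y\in X\mid y\leq x\}$, $x\in X$, as a subbasis of closed sets. Then (i) $\Rightarrow$ (ii) $\Rightarrow$ (iii) $\Rightarrow$ (iv). Moreover, if $(X,\leq)$ is a complete lattice, then (ii), (iii) and (iv) are equivalent.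
   Context: A spectral space is a topological space homeomorphic to the prime spectrum of a commutative ring with the Zariski topology; its specialization order is $x\leq y$ iff $y\in\mathrm{Cl}(\{x\})$. $X$ is locally with maximum if every point has a local basis of open sets each of which has a maximum with respect to $\leq$. The inverse topology of $\mathcal T$ is the topology whose closed sets are the intersections of open quasi-compact subsets of $(X,\mathcal T)$. *)

(* Defs.v *)
From HB Require Import structures.
From mathcomp Require Import all_boot all_algebra.
From mathcomp Require Import boolp classical_sets cardinality.
Set Implicit Arguments. Unset Strict Implicit. Unset Printing Implicit Defensive.
Import GRing.Theory.
Local Open Scope classical_set_scope.
Local Open Scope ring_scope.

Definition prime_ideal (R : comPzRingType) (P : set R) : Prop :=
  [/\ P 0, (forall x y, P x -> P y -> P (x + y)),
      (forall r x, P x -> P (r * x)), ~ P 1 &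
      (forall x y, P (x * y) -> P x \/ P y)].

Definition Spec (R : comPzRingType) := {P : set R | prime_ideal P}.

Definition zariski_open (R : comPzRingType) (U : set (Spec R)) : Prop :=
  exists S : set R, U = [set p : Spec R | ~ (S `<=` sval p)].

Definition spectral (X : Type) (O : set (set X)) : Prop :=
  exists (R : comPzRingType) (f : X -> Spec R),
    bijective f /\ forall U : set X, O U <-> zariski_open (f @` U).

Definition closed_in (X : Type) (O : set (set X)) (C : set X) := O (~` C).

Definition closure_in (X : Type) (O : set (set X)) (A : set X) : set X :=
  \bigcap_(C in [set C | closed_in O C /\ A `<=` C]) C.

Definition spec_le (X : Type) (O : set (set X)) (x y : X) : Prop :=
  closure_in O [set x] y.

Definition quasi_compact (X : Type) (O : set (set X)) (A : set X) : Prop :=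
  forall F : set (set X), F `<=` O -> A `<=` \bigcup_(U in F) U ->
    exists G : set (set X), [/\ G `<=` F, finite_set G & A `<=` \bigcup_(U in G) U].

Definition is_maximum (X : Type) (le : X -> X -> Prop) (V : set X) (m : X) :=
  V m /\ forall y, V y -> le y m.

Definition locally_with_maximum (X : Type) (O : set (set X)) : Prop :=
  forall x (U : set X), O U -> U x ->
    exists V : set X, [/\ O V, V x, V `<=` U & exists m, is_maximum (spec_le O) V m].

Definition down_set (X : Type) (le : X -> X -> Prop) (U : set X) :=
  forall x y, U x -> le y x -> U y.

Definition down_directed (X : Type) (le : X -> X -> Prop) (D : set X) :=
  (exists d, D d) /\ forall a b, D a -> D b -> exists c, [/\ D c, le c a & le c b].

Definition is_inf (X : Type) (le : X -> X -> Prop) (D : set X) (i : X) :=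
  (forall d, D d -> le i d) /\ forall l, (forall d, D d -> le l d) -> le l i.

Definition is_sup (X : Type) (le : X -> X -> Prop) (D : set X) (s : X) :=
  (forall d, D d -> le d s) /\ forall u, (forall d, D d -> le d u) -> le s u.

Definition scott_open_dual (X : Type) (le : X -> X -> Prop) (U : set X) : Prop :=
  down_set le U /\
  forall (D : set X) (i : X), down_directed le D -> is_inf le D i -> U i ->
    exists y, D y /\ U y.

Definition maximal_elements (X : Type) (le : X -> X -> Prop) (U : set X) : set X :=
  [set m | U m /\ forall y, U y -> le m y -> y = m].

Definition inverse_closed (X : Type) (O : set (set X)) (C : set X) : Prop :=
  exists G : set (set X), (forall V, G V -> O V /\ quasi_compact O V) /\
    C = \bigcap_(V in G) V.

Definition down_closure (X : Type) (le : X -> X -> Prop) (x : X) : set X :=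
  [set y | le y x].

(* closed sets of the topology with closed subbasis {down x | x in X}:
   arbitrary intersections of finite unions of subbasic closed sets *)
Definition down_subbasis_closed (X : Type) (le : X -> X -> Prop) (C : set X) : Prop :=
  exists G : set (set X),
    (forall K, G K -> exists F : set X, finite_set F /\
                        K = \bigcup_(x in F) down_closure le x) /\
    C = \bigcap_(K in G) K.

Definition complete_lattice (X : Type) (le : X -> X -> Prop) : Prop :=
  forall A : set X, (exists s, is_sup le A s) /\ (exists i, is_inf le A i).

(* Main.v *)
Require Import Defs.
From mathcomp Require Import all_boot all_algebra.
From mathcomp Require Import boolp classical_sets cardinality.
Set Implicit Arguments. Unset Strict Implicit. Unset Printing Implicit Defensive.
Import GRing.Theory.
Local Open Scope classical_set_scope.
Local Open Scope ring_scope.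

Lemma finite_ind (T : Type) (Q : set T -> Prop) :
  Q set0 -> (forall A x, finite_set A -> Q A -> Q (x |` A)) ->
  forall A, finite_set A -> Q A.
Proof.
move=> Q0 QS A /(@finite_seqP {classic T} A)[s ->]; elim: s => [|x s IH] /=.
  by have -> : [set` [::] ] = (set0 : set {classic T}) by apply/seteqP; split => y.
have -> : [set` x :: s] = x |` [set` s].
  apply/seteqP; split => y /=.
    by rewrite inE => /orP[/eqP->|]; [left|right].
  by rewrite inE => -[->|->]; rewrite ?eqxx ?orbT.
by apply: QS => //; exact: (@finite_seq {classic T}).
Qed.

Section Ring.
Variable R : comPzRingType.

Lemma pr0 (Q : set R) : prime_ideal Q -> Q 0. Proof. by case. Qed.
Lemma prD (Q : set R) : prime_ideal Q -> forall x y, Q x -> Q y -> Q (x + y). Proof. by case. Qed.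
Lemma prM (Q : set R) : prime_ideal Q -> forall r x, Q x -> Q (r * x). Proof. by case. Qed.
Lemma prMr (Q : set R) : prime_ideal Q -> forall r x, Q x -> Q (x * r).
Proof. by move=> h r x qx; rewrite mulrC; apply: prM. Qed.
Lemma pr1 (Q : set R) : prime_ideal Q -> ~ Q 1. Proof. by case. Qed.
Lemma prP (Q : set R) : prime_ideal Q -> forall x y, Q (x * y) -> Q x \/ Q y. Proof. by case. Qed.
Lemma prX (Q : set R) : prime_ideal Q -> forall r n, Q (r ^+ n) -> Q r.
Proof.
move=> h r; elim=> [|n IH]; first by rewrite expr0 => /(pr1 h).
by rewrite exprS => /(prP h)[|/IH].
Qed.

Definition is_ideal (J : set R) :=
  [/\ J 0, (forall x y, J x -> J y -> J (x + y)) & (forall a x, J x -> J (a * x))].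

Lemma prime_exists (I : set R) (r : R) : is_ideal I ->
  (forall n, ~ I (r ^+ n)) -> exists Q, [/\ prime_ideal Q, I `<=` Q & ~ Q r].
Proof.
move=> hI hr.
pose T := {J : set R | is_ideal J /\ I `<=` J /\ forall n, ~ J (r ^+ n)}.
pose Rl := fun (A B : T) => `[< sval A `<=` sval B >].
have [] := @Zorn T Rl.
- by move=> t; apply/asboolP.
- by move=> a b c /asboolP hab /asboolP hbc; apply/asboolP => z /hab /hbc.
- move=> [a ha] [b hb] /asboolP hab /asboolP hba; apply: eq_exist.
  by apply/seteqP; split.
- move=> A hA.
  have [[a0 Aa0]|nA] := pselect (exists a, A a); last first.
    exists (exist _ I (conj hI (conj (fun x h => h) hr))) => s As.
    by exfalso; apply: nA; exists s.
  pose U := [set x | exists a, A a /\ sval a x].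
  have hU : is_ideal U /\ I `<=` U /\ forall n, ~ U (r ^+ n).
    split; [split|split].
    + by exists a0; split => //; case: (svalP a0) => [[]].
    + move=> x y [a [Aa ax]] [b [Ab bx]].
      have [/asboolP hab|/asboolP hba] := hA a b Aa Ab.
      * exists b; split => //; case: (svalP b) => [[_ hD _] _]; apply: hD => //; exact: hab.
      * exists a; split => //; case: (svalP a) => [[_ hD _] _]; apply: hD => //; exact: hba.
    + move=> c x [a [Aa ax]]; exists a; split => //.
      by case: (svalP a) => [[_ _ hM] _]; apply: hM.
    + by move=> x Ix; exists a0; split => //; case: (svalP a0) => [_ [h _]]; apply: h.
    + by move=> n [a [Aa ax]]; case: (svalP a) => [_ [_ h]]; exact: (h n).
  by exists (exist _ U hU) => s As; apply/asboolP => x sx; exists s.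
move=> [J [[J0 JD JM] [IJ Jr]]] Jmax.
exists J; split => //; last first.
  by move=> Jr1; apply: (Jr 1%N); rewrite expr1.
split => //.
- by move=> J1; apply: (Jr 0%N); rewrite expr0.
move=> a b Jab; case: (pselect (J a)) => [|na]; first by left.
case: (pselect (J b)) => [|nb]; first by right.
exfalso.
have ext : forall c, ~ J c -> exists n x j, J j /\ r ^+ n = j + x * c.
  move=> c nc; apply: contrapT => hn.
  pose K := [set z | exists x j, J j /\ z = j + x * c].
  have hK : is_ideal K /\ I `<=` K /\ forall n, ~ K (r ^+ n).
    split; [split|split].
    + by exists 0, 0; split => //; rewrite mul0r addr0.
    + move=> y z [x1 [j1 [Jj1 ->]]] [x2 [j2 [Jj2 ->]]].
      exists (x1 + x2), (j1 + j2); split; first exact: (JD).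
      by rewrite mulrDl !addrA; congr (_ + _); rewrite -!addrA; congr (_ + _); rewrite addrC.
    + move=> d y [x [j [Jj ->]]]; exists (d * x), (d * j); split; first exact: (JM).
      by rewrite mulrDr mulrA.
    + by move=> z Iz; exists 0, z; split; [exact: (IJ)|rewrite mul0r addr0].
    + by move=> n [x [j [Jj hj]]]; apply: hn; exists n, x, j.
  have := Jmax (exist _ K hK).
  have hJK : Rl (exist _ J (conj (And3 J0 JD JM) (conj IJ Jr))) (exist _ K hK).
    by apply/asboolP => z Jz /=; exists 0, z; split => //; rewrite mul0r addr0.
  move=> /(_ hJK) [] hKJ; apply: nc; rewrite -hKJ /=.
  by exists 1, 0; split => //; rewrite add0r mul1r.
have [n [x [j [Jj e1]]]] := ext a na.
have [m [y [k [Jk e2]]]] := ext b nb.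
apply: (Jr (n + m)%N); rewrite exprD e1 e2.
rewrite mulrDl !mulrDr mulrACA.
apply: (JD); first by apply: (JD); rewrite mulrC; apply: (JM).
by apply: (JD); apply: (JM).
Qed.

End Ring.


Section Spec.
Variables (X : Type) (R : comPzRingType) (P : X -> set R) (O : set (set X)).
Hypothesis Pprime : forall x, prime_ideal (P x).
Hypothesis Pinj : injective P.
Hypothesis Psurj : forall Q, prime_ideal Q -> exists x, P x = Q.
Hypothesis Oiff : forall U, O U <-> exists S : set R, U = [set z | ~ (S `<=` P z)].

Local Notation le := (spec_le O).
Definition DS (S : set R) := [set z | ~ (S `<=` P z)].
Definition D1 (r : R) := [set z | ~ P z r].

Lemma D1E r : D1 r = DS [set r].
Proof.
apply/seteqP; split => z /=.
  by move=> nz h; apply: nz; apply: h.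
by move=> h pz; apply: h => s ->.
Qed.

Lemma open_DS S : O (DS S). Proof. by apply/Oiff; exists S. Qed.
Lemma open_D1 r : O (D1 r). Proof. by rewrite D1E; apply: open_DS. Qed.

Lemma le_iff x y : le x y <-> P x `<=` P y.
Proof.
split.
- move=> hxy r Pxr; apply: contrapT => nPy.
  have : [set z | P z r] y.
    apply: hxy; split; last by move=> z ->.
    rewrite /closed_in.
    have -> : ~` [set z | P z r] = D1 r by [].
    exact: open_D1.
  by [].
- move=> sub C [hC hxC]; apply: contrapT => nCy.
  move/Oiff: hC => [S hS].
  have : (~` C) y by [].
  rewrite hS /= => nS; apply: nS => s Ss.
  apply: sub; apply: contrapT => nPx.
  have : (~` C) x by rewrite hS /= => h; apply: nPx; apply: h.
  by apply; apply: hxC.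
Qed.

Lemma le_refl x : le x x. Proof. by apply/le_iff. Qed.
Lemma le_trans x y z : le x y -> le y z -> le x z.
Proof. by move=> /le_iff h1 /le_iff h2; apply/le_iff => r /h1 /h2. Qed.
Lemma le_anti x y : le x y -> le y x -> x = y.
Proof. by move=> /le_iff h1 /le_iff h2; apply: Pinj; apply/seteqP; split. Qed.

Lemma open_down U x y : O U -> U y -> le x y -> U x.
Proof.
move=> /Oiff[S ->] /= nS /le_iff h hS; apply: nS => s /hS; exact: h.
Qed.

Lemma open_union U : (forall x, U x -> exists V, O V /\ V x /\ V `<=` U) -> O U.
Proof.
move=> hU; apply/Oiff; exists [set s | D1 s `<=` U].
apply/seteqP; split => z.
- move=> /hU [V [/Oiff[S hS] [Vz VU]]] /= hsub.
  move: Vz; rewrite hS /= => nS; apply: nS => s Ss; apply: contrapT => nPs.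
  have : D1 s `<=` U.
    by move=> w /= nw; apply: VU; rewrite hS /= => h; apply: nw; apply: h.
  by move=> /hsub.
- move=> /= nS; apply: contrapT => nU; apply: nS => s hs.
  by apply: contrapT => nP; apply: nU; apply: hs.
Qed.

Lemma open_setU A B : O A -> O B -> O (A `|` B).
Proof.
move=> hA hB; apply: open_union => x [Ax|Bx].
  by exists A; split => //; split => // z ?; left.
by exists B; split => //; split => // z ?; right.
Qed.

Lemma open_set0 : O set0.
Proof.
have -> : set0 = DS set0 by apply/seteqP; split => z //= h; apply: h.
exact: open_DS.
Qed.

Lemma open_setT : O setT.
Proof.
have -> : setT = D1 1 by apply/seteqP; split => z // _; exact: (pr1 (Pprime z)).
exact: open_D1.
Qed.

Lemma open_inter U V : O U -> O V -> O (U `&` V).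
Proof.
move=> /Oiff[S1 ->] /Oiff[S2 ->]; apply/Oiff.
exists [set s | exists a b, [/\ S1 a, S2 b & s = a * b]].
apply/seteqP; split => z.
- move=> [/= n1 n2] hs.
  apply: n1 => a S1a; apply: contrapT => na.
  apply: n2 => b S2b; apply: contrapT => nb.
  have := hs (a * b) (ex_intro _ a (ex_intro _ b (And3 S1a S2b erefl))).
  by move=> /(prP (Pprime z)) [].
- move=> /= nS; split.
  + move=> h; apply: nS => s [a [b [S1a S2b ->]]]; apply: prMr => //; exact: h.
  + move=> h; apply: nS => s [a [b [S1a S2b ->]]]; apply: prM => //; exact: h.
Qed.

Lemma D1M r s : D1 (r * s) = D1 r `&` D1 s.
Proof.
apply/seteqP; split => z /=.
- by move=> h; split => hz; apply: h; [apply: prMr|apply: prM].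
- by move=> [h1 h2] /(prP (Pprime z))[].
Qed.

Lemma open_basis U x : O U -> U x -> exists r, D1 r x /\ D1 r `<=` U.
Proof.
move=> /Oiff[S ->] /= nS.
have [s [Ss nPs]] : exists s, S s /\ ~ P x s.
  apply: contrapT => hn; apply: nS => s Ss; apply: contrapT => np.
  by apply: hn; exists s.
exists s; split => // z /= nz hz; apply: nz; exact: hz.
Qed.

Lemma scott_of_open U : O U -> scott_open_dual le U.
Proof.
move=> oU; split; first by move=> x y Ux hyx; apply: open_down oU Ux hyx.
move=> D i [[d0 Dd0] Ddir] [ilb iglb] Ui.
pose Q := [set r | forall d, D d -> P d r].
have pQ : prime_ideal Q.
  split.
  - by move=> d _; exact: pr0.
  - by move=> x y hx hy d Dd; apply: prD => //; [apply: hx|apply: hy].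
  - by move=> r x hx d Dd; apply: prM => //; apply: hx.
  - by move=> h; apply: (pr1 (Pprime d0)); apply: h.
  - move=> x y hxy.
    case: (pselect (Q x)) => [|nx]; first by left.
    case: (pselect (Q y)) => [|ny]; first by right.
    exfalso.
    have [a [Da na]] : exists a, D a /\ ~ P a x.
      by apply: contrapT => h; apply: nx => d Dd; apply: contrapT => nd; apply: h; exists d.
    have [b [Db nb]] : exists b, D b /\ ~ P b y.
      by apply: contrapT => h; apply: ny => d Dd; apply: contrapT => nd; apply: h; exists d.
    have [c [Dc /le_iff ca /le_iff cb]] := Ddir a b Da Db.
    have := hxy c Dc; move=> /(prP (Pprime c)) [/ca|/cb]; by [].
have [q Pq] := Psurj pQ.
have qi : le q i.
  by apply: iglb => d Dd; apply/le_iff; rewrite Pq => r hr; apply: hr.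
have Uq := open_down oU Ui qi.
have [r [rq rU]] := open_basis oU Uq.
have [d [Dd nd]] : exists d, D d /\ ~ P d r.
  apply: contrapT => h; apply: rq; rewrite Pq => d Dd; apply: contrapT => nd.
  by apply: h; exists d.
by exists d; split => //; apply: rU.
Qed.

End Spec.


Section Spec3.
Variables (X : Type) (R : comPzRingType) (P : X -> set R) (O : set (set X)).
Hypothesis Pprime : forall x, prime_ideal (P x).
Hypothesis Pinj : injective P.
Hypothesis Psurj : forall Q, prime_ideal Q -> exists x, P x = Q.
Hypothesis Oiff : forall U, O U <-> exists S : set R, U = [set z | ~ (S `<=` P z)].

Local Notation le := (spec_le O).
Local Notation D1 := (D1 P).
Local Notation DS := (DS P).

Lemma sum_in z (l : seq (R * R)) : (forall p, p \in l -> P z p.2) ->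
  P z (\sum_(p <- l) p.1 * p.2).
Proof.
elim: l => [|p l IH] h; first by rewrite big_nil; exact: pr0.
rewrite big_cons; apply: prD => //; first by apply: prM => //; apply: h; rewrite inE eqxx.
by apply: IH => q ql; apply: h; rewrite inE ql orbT.
Qed.

Lemma qc_D1 r : quasi_compact O (D1 r).
Proof.
move=> F FO cover.
pose T := [set t | exists V, F V /\ D1 t `<=` V].
pose I := [set x | exists l : seq (R * R), (forall p, p \in l -> T p.2) /\
                     x = \sum_(p <- l) p.1 * p.2].
have hI : is_ideal I.
  split.
  - by exists [::]; split => //; rewrite big_nil.
  - move=> x y [l1 [h1 ->]] [l2 [h2 ->]]; exists (l1 ++ l2); split; last by rewrite big_cat.
    by move=> p; rewrite mem_cat => /orP[/h1|/h2].
  - move=> a x [l [h ->]]; exists [seq (a * p.1, p.2) | p <- l]; split.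
      by move=> p /mapP[q ql ->] /=; apply: h.
    rewrite big_map mulr_sumr; apply: eq_bigr => p _ /=; by rewrite mulrA.
case: (pselect (exists n, I (r ^+ n))) => [[n [l [hl hn]]]|nI]; last first.
  have [Q [pQ IQ nQ]] := prime_exists hI (fun n h => nI (ex_intro _ n h)).
  have [z Pz] := Psurj pQ.
  have Dz : D1 r z by move=> hz; apply: nQ; rewrite -Pz.
  have [V FV Vz] := cover z Dz.
  have [s [sz sV]] := open_basis Oiff (FO V FV) Vz.
  exfalso; apply: sz; rewrite Pz; apply: IQ.
  exists [:: (1, s)]; split; last by rewrite big_cons big_nil mul1r addr0.
  by move=> p; rewrite inE => /eqP -> /=; exists V.
pose pk := fun t => match pselect (exists V, F V /\ D1 t `<=` V) with
                    | left h => projT1 (cid h) | right _ => set0 end.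
have pkP : forall t, T t -> F (pk t) /\ D1 t `<=` pk t.
  move=> t Tt; rewrite /pk; case: pselect => // h.
  exact: (projT2 (cid h)).
exists [set pk p.2 | p in [set` l]]; split.
- by move=> W [p pl <-]; apply: (pkP _ (hl p pl)).1.
- exact/finite_image/finite_seq.
- move=> z Dz.
  have nz : ~ P z (r ^+ n) by move=> /(prX (Pprime z)).
  have [p [pl npz]] : exists p, p \in l /\ ~ P z p.2.
    apply: contrapT => h; apply: nz; rewrite hn; apply: sum_in => p pl.
    by apply: contrapT => np; apply: h; exists p.
  exists (pk p.2); first by exists p.
  by apply: (pkP _ (hl p pl)).2.
Qed.

Lemma qc_set0 : quasi_compact O set0.
Proof. by move=> F _ _; exists set0; split => //; exact: finite_set0. Qed.

Lemma qc_setU A B : quasi_compact O A -> quasi_compact O B ->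
  quasi_compact O (A `|` B).
Proof.
move=> qA qB F FO cov.
have [G1 [G1F fG1 c1]] := qA F FO (fun z Az => cov z (or_introl Az)).
have [G2 [G2F fG2 c2]] := qB F FO (fun z Bz => cov z (or_intror Bz)).
exists (G1 `|` G2); split.
- by move=> W [/G1F|/G2F].
- by rewrite finite_setU.
- move=> z [/c1|/c2] [W GW Wz]; exists W => //; by [left|right].
Qed.

Lemma max_exists U x : O U -> quasi_compact O U -> U x ->
  exists m, maximal_elements le U m /\ le x m.
Proof.
move=> oU qU Ux.
pose T := {z | U z /\ le x z}.
pose Rl := fun (a b : T) => `[< le (sval a) (sval b) >].
have [] := @Zorn T Rl.
- by move=> t; apply/asboolP; apply: (le_refl Oiff).
- by move=> a b c /asboolP hab /asboolP hbc; apply/asboolP; apply: (le_trans Oiff) hab hbc.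
- move=> [a ha] [b hb] /asboolP hab /asboolP hba; apply: eq_exist.
  exact: (le_anti Pinj).
- move=> A hA.
  have [[a0 Aa0]|nA] := pselect (exists a, A a); last first.
    exists (exist _ x (conj Ux (le_refl Oiff (x:=x)))) => s As.
    by exfalso; apply: nA; exists s.
  pose Q := [set r | exists a, A a /\ P (sval a) r].
  have pQ : prime_ideal Q.
    split.
    + by exists a0; split => //; exact: pr0.
    + move=> y z [a [Aa ay]] [b [Ab bz]].
      have [/asboolP/(le_iff Oiff) hab|/asboolP/(le_iff Oiff) hba] := hA a b Aa Ab.
      * by exists b; split => //; apply: prD => //; apply: hab.
      * by exists a; split => //; apply: prD => //; apply: hba.
    + by move=> c y [a [Aa ay]]; exists a; split => //; apply: prM.
    + by move=> [a [_ a1]]; exact: (pr1 (Pprime _) a1).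
    + move=> y z [a [Aa ayz]]; have [] := prP (Pprime _) ayz.
      * by move=> h; left; exists a.
      * by move=> h; right; exists a.
  have [q Pq] := Psurj pQ.
  have aq : forall a, A a -> le (sval a) q.
    by move=> a Aa; apply/(le_iff Oiff); rewrite Pq => r ar; exists a.
  have Uq : U q.
    apply: contrapT => nUq.
    move: (oU) => /Oiff[S hS].
    have SQ : S `<=` Q.
      move=> s Ss; apply: contrapT => nQ; apply: nUq; rewrite hS /= => h.
      by apply: nQ; rewrite -Pq; apply: h.
    pose W := fun a : T => DS (S `&` P (sval a)).
    have FO : [set V | exists a, A a /\ V = W a] `<=` O.
      by move=> V [a [_ ->]]; exact: open_DS.
    have cov : U `<=` \bigcup_(V in [set V | exists a, A a /\ V = W a]) V.
      move=> z Uz; move: (Uz); rewrite hS /= => nS.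
      have [s [Ss ns]] : exists s, S s /\ ~ P z s.
        by apply: contrapT => h; apply: nS => s Ss; apply: contrapT => np; apply: h; exists s.
      have [a [Aa as']] := SQ s Ss.
      exists (W a); first by exists a.
      by move=> h; apply: ns; apply: h.
    have [G [GF fG cG]] := qU _ FO cov.
    have : exists a, A a /\ forall V, G V -> V `<=` W a.
      move: G fG GF {cG}; apply: finite_ind.
        by move=> _; exists a0; split.
      move=> G V _ IH hGV.
      have [a [Aa ha]] := IH (fun Z GZ => hGV Z (or_intror GZ)).
      have [b [Ab ->]] := hGV V (or_introl erefl).
      have mono : forall c d, le (sval c) (sval d) -> W c `<=` W d.
        move=> c d /(le_iff Oiff) cd z /= h1 h2; apply: h1 => s [Ss cs]; apply: h2; split => //.
        exact: cd.
      have [/asboolP ab|/asboolP ba] := hA a b Aa Ab.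
      * exists b; split => // Z [-> //|/ha]; move=> h; apply: subset_trans h _.
        exact: mono.
      * exists a; split => // Z [->|/ha //]; exact: mono.
    move=> [a [Aa ha]].
    have [V GV Va] := cG (sval a) (svalP a).1.
    by have := ha V GV _ Va; apply => s [].
  exists (exist _ q (conj Uq (le_trans Oiff (svalP a0).2 (aq a0 Aa0)))).
  by move=> s As; apply/asboolP; apply: aq.
move=> [m [Um xm]] mmax; exists m; split => //; split => // y Uy my.
have := mmax (exist _ y (conj Uy (le_trans Oiff xm my))).
by move=> /(_ (introT (asboolP _) my)) [].
Qed.

End Spec3.


Section Spec4.
Variables (X : Type) (R : comPzRingType) (P : X -> set R) (O : set (set X)).
Hypothesis Pprime : forall x, prime_ideal (P x).
Hypothesis Pinj : injective P.
Hypothesis Psurj : forall Q, prime_ideal Q -> exists x, P x = Q.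
Hypothesis Oiff : forall U, O U <-> exists S : set R, U = [set z | ~ (S `<=` P z)].

Local Notation le := (spec_le O).
Local Notation D1 := (D1 P).
Local Notation DS := (DS P).

Lemma inv_closedE C : inverse_closed O C <->
  (forall y, (forall V, O V -> quasi_compact O V -> C `<=` V -> V y) -> C y).
Proof.
split.
- move=> [G [hG ->]] y hy V GV; have [oV qV] := hG V GV.
  by apply: hy => // z hz; apply: hz.
- move=> hy; exists [set V | [/\ O V, quasi_compact O V & C `<=` V]]; split.
    by move=> V [].
  apply/seteqP; split => z.
    by move=> Cz V [_ _ CV]; apply: CV.
  by move=> hz; apply: hy => V oV qV CV; apply: hz.
Qed.

Lemma down_inv_closed x : inverse_closed O (down_closure le x).
Proof.
apply/inv_closedE => y hy /=; apply/(le_iff Oiff) => r Pyr.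
apply: contrapT => nPx.
have : D1 r y.
  apply: (hy (D1 r)); [exact: open_D1|exact: qc_D1|].
  move=> z /= /(le_iff Oiff) zx Pzr; apply: nPx; exact: zx.
by apply.
Qed.

Lemma inv_closedU A B : inverse_closed O A -> inverse_closed O B ->
  inverse_closed O (A `|` B).
Proof.
move=> /inv_closedE hA /inv_closedE hB; apply/inv_closedE => y hy.
case: (pselect (A y)) => [|nA]; first by left.
case: (pselect (B y)) => [|nB]; first by right.
exfalso.
have [V1 [o1 q1 A1 n1]] : exists V, [/\ O V, quasi_compact O V, A `<=` V & ~ V y].
  apply: contrapT => h; apply: nA; apply: hA => V oV qV AV; apply: contrapT => nV.
  by apply: h; exists V.
have [V2 [o2 q2 B2 n2]] : exists V, [/\ O V, quasi_compact O V, B `<=` V & ~ V y].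
  apply: contrapT => h; apply: nB; apply: hB => V oV qV BV; apply: contrapT => nV.
  by apply: h; exists V.
have := hy (V1 `|` V2) (open_setU Oiff o1 o2) (qc_setU q1 q2).
by move=> /(_ (fun z hz => match hz with or_introl a => or_introl (A1 z a)
                             | or_intror b => or_intror (B2 z b) end)) [].
Qed.

Lemma inv_closed0 : inverse_closed O set0.
Proof.
exists [set set0]; split.
  by move=> V ->; split; [exact: open_set0|exact: qc_set0].
by apply/seteqP; split => z // /(_ set0 erefl).
Qed.

Lemma inv_closed_bigcap (G : set (set X)) :
  (forall K, G K -> inverse_closed O K) -> inverse_closed O (\bigcap_(K in G) K).
Proof.
move=> hG; apply/inv_closedE => y hy K GK.
have /inv_closedE := hG K GK; apply => V oV qV KV; apply: hy => // z hz.
by apply: KV; apply: hz.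
Qed.

Lemma bigcup_U1 (A : set X) a (f : X -> set X) :
  \bigcup_(x in a |` A) f x = f a `|` \bigcup_(x in A) f x.
Proof.
apply/seteqP; split => z.
  by move=> [x [->|Ax] fz]; [left|right; exists x].
by move=> [fz|[x Ax fz]]; [exists a => //; left|exists x => //; right].
Qed.

Lemma subbasis_inv C : down_subbasis_closed le C -> inverse_closed O C.
Proof.
move=> [G [hG ->]]; apply: inv_closed_bigcap => K /hG [F [fF ->]].
move: F fF; apply: finite_ind.
  have -> : \bigcup_(x in set0) down_closure le x = set0.
    by apply/seteqP; split => z // [].
  exact: inv_closed0.
move=> A a _ IH; rewrite bigcup_U1; apply: inv_closedU => //.
exact: down_inv_closed.
Qed.

Lemma c3c4 : (forall U, O U -> quasi_compact O U -> finite_set (maximal_elements le U)) ->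
  forall C, inverse_closed O C <-> down_subbasis_closed le C.
Proof.
move=> c3 C; split; last exact: subbasis_inv.
move=> [G [hG ->]]; exists G; split => // K GK.
have [oK qK] := hG K GK.
exists (maximal_elements le K); split; first exact: c3.
apply/seteqP; split => z.
  move=> Kz; have [m [Mm zm]] := max_exists Pprime Pinj Psurj Oiff oK qK Kz.
  by exists m.
by move=> [m [Km _] zm]; apply: (open_down Oiff oK Km zm).
Qed.

Lemma c2c3 : (forall U, O U <-> scott_open_dual le U) ->
  forall U, O U -> quasi_compact O U -> finite_set (maximal_elements le U).
Proof.
move=> c2 U oU qU; set M := maximal_elements le U.
have [Udown Uscott] := scott_of_open Pprime Psurj Oiff oU.
case: (pselect (exists m, M m)) => [[m0 Mm0]|nM]; last first.
  have -> : M = set0 by apply/seteqP; split => z // Mz; apply: nM; exists z.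
  exact: finite_set0.
pose Sm m := [set z | U z /\ ~ (M z /\ z <> m)].
have So : forall m, O (Sm m).
  move=> m; apply/c2; split.
    move=> z w [Uz nz] wz; split; first exact: Udown Uz wz.
    move=> [[Uw wmax] wm]; have ezw := wmax z Uz wz; apply: nz; rewrite ezw.
    by split.
  move=> D i [[d0 Dd0] Ddir] [ilb iglb] [Ui ni].
  have [d1 [Dd1 Ud1]] := Uscott D i (conj (ex_intro _ d0 Dd0) Ddir) (conj ilb iglb) Ui.
  apply: contrapT => hn.
  have hall : forall d, D d -> U d -> M d /\ d <> m.
    move=> d Dd Ud; apply: contrapT => h; apply: hn; exists d; split => //.
  have [Md1 d1m] := hall d1 Dd1 Ud1.
  have d1lb : forall e, D e -> le d1 e.
    move=> e De; have [c [Dc ce cd1]] := Ddir e d1 De Dd1.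
    have Uc : U c := Udown d1 c Ud1 cd1.
    have [[_ cmax] _] := hall c Dc Uc.
    by have -> := cmax d1 Ud1 cd1.
  have := iglb d1 d1lb => d1i.
  have ei : i = d1 by apply: Md1.2.
  by apply: ni; rewrite ei; split.
have cov : U `<=` \bigcup_(V in [set V | exists m, M m /\ V = Sm m]) V.
  move=> z Uz; case: (pselect (M z)) => [Mz|nMz].
    by exists (Sm z); [exists z|split => // -[]].
  by exists (Sm m0); [exists m0|split => // -[]].
have [G [GF fG cG]] := qU _ (fun V '(ex_intro m (conj _ e)) => eq_ind_r O (So m) e) cov.
apply: (@sub_finite_set _ _ (\bigcup_(V in G) (V `&` M))).
  move=> z Mz; have [V GV Vz] := cG z Mz.1; by exists V.
apply: bigcup_finite => // V GV.
have [m [Mm ->]] := GF V GV.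
apply: (@sub_finite_set _ _ [set m]) => // z [[_ nz] Mz].
by apply: contrapT => zm; apply: nz.
Qed.

End Spec4.


Section Spec5.
Variables (X : Type) (R : comPzRingType) (P : X -> set R) (O : set (set X)).
Hypothesis Pprime : forall x, prime_ideal (P x).
Hypothesis Pinj : injective P.
Hypothesis Psurj : forall Q, prime_ideal Q -> exists x, P x = Q.
Hypothesis Oiff : forall U, O U <-> exists S : set R, U = [set z | ~ (S `<=` P z)].

Local Notation le := (spec_le O).
Local Notation D1 := (D1 P).
Local Notation DS := (DS P).

Lemma c1c2 : locally_with_maximum O -> forall U, O U <-> scott_open_dual le U.
Proof.
move=> c1 U; split; first exact: (scott_of_open Pprime Psurj Oiff).
move=> [Udown Uscott]; apply: (open_union Oiff) => x Ux.
pose D := [set m | exists V, [/\ O V, V x & is_maximum le V m]].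
have Ddir : down_directed le D.
  split.
    have [V [oV Vx _ [m mx]]] := c1 x setT (open_setT Pprime Oiff) I.
    by exists m, V.
  move=> a b [Va [oa xa [ma amax]]] [Vb [ob xb [mb bmax]]].
  have [V [oV Vx VU [m [mV mmax]]]] := c1 x (Va `&` Vb) (open_inter Pprime Oiff oa ob) (conj xa xb).
  exists m; split; first by exists V.
  - by apply: amax; exact: (VU m mV).1.
  - by apply: bmax; exact: (VU m mV).2.
have Dinf : is_inf le D x.
  split; first by move=> m [V [_ Vx [_ h]]]; apply: h.
  move=> l hl; apply/(le_iff Oiff) => r Plr; apply: contrapT => nPx.
  have [V [oV Vx VU [m [mV mmax]]]] := c1 x (D1 r) (open_D1 Oiff r) nPx.
  have lm : le l m by apply: hl; exists V.
  have Vl := open_down Oiff oV mV lm.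
  by apply: (VU l Vl).
have [m [[V [oV Vx [mV mmax]]] Um]] := Uscott D x Ddir Dinf Ux.
exists V; split => //; split => // z Vz.
exact: Udown m z Um (mmax z Vz).
Qed.

Section CL.
Hypothesis cl : complete_lattice le.

Definition meet (a b : X) : X := projT1 (cid ((cl [set z | z = a \/ z = b]).2)).
Lemma meetP a b : is_inf le [set z | z = a \/ z = b] (meet a b).
Proof. exact: (projT2 (cid ((cl [set z | z = a \/ z = b]).2))). Qed.
Lemma meet_l a b : le (meet a b) a. Proof. by apply: (meetP a b).1; left. Qed.
Lemma meet_r a b : le (meet a b) b. Proof. by apply: (meetP a b).1; right. Qed.
Lemma meet_glb a b l : le l a -> le l b -> le l (meet a b).
Proof. by move=> la lb; apply: (meetP a b).2 => d [->|->]. Qed.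

Definition top : X := projT1 (cid ((cl setT).1)).
Lemma le_top z : le z top. Proof. exact: ((projT2 (cid ((cl setT).1))).1 z I). Qed.

Lemma c4c2 : (forall C, inverse_closed O C <-> down_subbasis_closed le C) ->
  forall U, O U <-> scott_open_dual le U.
Proof.
move=> c4 U; split; first exact: (scott_of_open Pprime Psurj Oiff).
move=> [Udown Uscott].
pose A := ~` U.
have Aup : forall a b, A a -> le a b -> A b.
  by move=> a b Aa ab Ub; apply: Aa; exact: Udown b a Ub ab.
have Aclosed : forall D i, down_directed le D -> D `<=` A -> is_inf le D i -> A i.
  move=> D i dD DA iD Ui; have [d [Dd Ud]] := Uscott D i dD iD Ui.
  exact: DA d Dd Ud.
apply: (open_union Oiff) => y Uy.
apply: contrapT => hneg.
have hmeet : forall r, D1 r y -> exists w, D1 r w /\ A w.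
  move=> r Dy; apply: contrapT => h; apply: hneg; exists (D1 r).
  split; first exact: open_D1.
  split => // z Dz; apply: contrapT => nU; apply: h; by exists z.
pose KK := fun K : set X => (exists F, finite_set F /\ K = \bigcup_(x in F) down_closure le x)
                          /\ exists r, D1 r y /\ D1 r `<=` K.
have KT : KK setT.
  split.
    exists [set top]; split => //; apply/seteqP; split => z // _.
    by exists top => //; exact: le_top.
  by exists 1; split => //; exact: (pr1 (Pprime y)).
have KI : forall K1 K2, KK K1 -> KK K2 -> KK (K1 `&` K2).
  move=> K1 K2 [[F1 [f1 e1]] [r1 [y1 s1]]] [[F2 [f2 e2]] [r2 [y2 s2]]]; split.
    exists [set meet x1 x2 | x1 in F1 & x2 in F2]; split.
      exact: finite_image2.
    rewrite e1 e2; apply/seteqP; split => z.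
      move=> [[x1 F1x1 z1] [x2 F2x2 z2]]; exists (meet x1 x2).
        by exists x1 => //; exists x2.
      exact: meet_glb.
    move=> [_ [x1 F1x1 [x2 F2x2 <-]] zm]; split.
      by exists x1 => //=; apply: (le_trans Oiff zm); exact: meet_l.
    by exists x2 => //=; apply: (le_trans Oiff zm); exact: meet_r.
  exists (r1 * r2); split; first by rewrite (D1M Pprime) /=; split.
  by rewrite (D1M Pprime) => z [z1 z2]; split; [apply: s1|apply: s2].
pose H := fun a => forall K, KK K -> exists w, [/\ K w, A w & le w a].
have Htop : H top.
  move=> K [_ [r [yr rK]]]; have [w [rw Aw]] := hmeet r yr.
  by exists w; split => //; [exact: rK|exact: le_top].
pose T := {a | H a}.
pose Rl := fun (a b : T) => `[< le (sval b) (sval a) >].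
have [] := @Zorn T Rl.
- by move=> t; apply/asboolP; apply: (le_refl Oiff).
- by move=> a b c /asboolP hab /asboolP hbc; apply/asboolP; apply: (le_trans Oiff) hbc hab.
- move=> [a ha] [b hb] /asboolP hab /asboolP hba; apply: eq_exist.
  exact: (le_anti Pinj).
- move=> Ch hCh.
  have [[a0 Ca0]|nC] := pselect (exists a, Ch a); last first.
    exists (exist _ top Htop) => s Cs.
    by exfalso; apply: nC; exists s.
  have [cs [cslb csglb]] := (cl (sval @` Ch)).2.
  have Hcs : H cs.
    move=> K KK_K; have [[F [fF eK]] _] := KK_K.
    have [x [Fx hx]] : exists x, F x /\ forall c, Ch c ->
        exists w, [/\ A w, le w (sval c) & le w x].
      apply: contrapT => hn.
      have : exists c, Ch c /\ forall x, F x ->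
          ~ exists w, [/\ A w, le w (sval c) & le w x].
        suff gen : forall G, finite_set G -> G `<=` F -> exists c, Ch c /\ forall x, G x ->
            ~ exists w, [/\ A w, le w (sval c) & le w x] by exact: gen.
        apply: finite_ind.
          by move=> _; exists a0; split.
        move=> G x0 _ IH hG.
        have [c [Cc hc]] := IH (fun z Gz => hG z (or_intror Gz)).
        have [c' [Cc' hc']] : exists c', Ch c' /\
            ~ exists w, [/\ A w, le w (sval c') & le w x0].
          apply: contrapT => h1; apply: hn; exists x0; split; first exact: hG x0 (or_introl erefl).
          move=> c1 C1; apply: contrapT => h2; apply: h1; by exists c1.
        have [/asboolP cc'|/asboolP c'c] := hCh c c' Cc Cc'.
        + exists c'; split => // z [->//|Gz] [w [Aw wc' wz]].
          by apply: (hc z Gz); exists w; split => //; exact: (le_trans Oiff) wc' cc'.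
        + exists c; split => // z [->|Gz] [w [Aw wc wz]].
            by apply: hc'; exists w; split => //; exact: (le_trans Oiff) wc c'c.
          by apply: (hc z Gz); exists w.
      move=> [c [Cc hc]].
      have [w [Kw Aw wc]] := (svalP c) K KK_K.
      move: Kw; rewrite eK => -[x Fx wx].
      by apply: (hc x Fx); exists w.
    pose Dm := [set meet (sval c) x | c in Ch].
    have dDm : down_directed le Dm.
      split; first by exists (meet (sval a0) x); exists a0.
      move=> _ _ [c1 C1 <-] [c2 C2 <-].
      have mono : forall u v, le u v -> le (meet u x) (meet v x).
        move=> u v uv; apply: meet_glb; last exact: meet_r.
        exact: (le_trans Oiff (@meet_l u x) uv).
      have [/asboolP c21|/asboolP c12] := hCh c1 c2 C1 C2.
      + exists (meet (sval c2) x); split; [by exists c2|exact: mono|exact: (le_refl Oiff)].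
      + exists (meet (sval c1) x); split; [by exists c1|exact: (le_refl Oiff)|exact: mono].
    have DmA : Dm `<=` A.
      move=> _ [c Cc <-]; have [w [Aw wc wx]] := hx c Cc.
      by apply: Aup Aw _; apply: meet_glb.
    have [i iD] := (cl Dm).2.
    have Ai := Aclosed Dm i dDm DmA iD.
    exists i; split => //.
    + rewrite eK; exists x => //=.
      have h0 : Dm (meet (sval a0) x) by exists a0.
      change (le i x); apply: (le_trans Oiff (iD.1 _ h0)); exact: meet_r.
    + apply: csglb => _ [c Cc <-].
      have h0 : Dm (meet (sval c) x) by exists c.
      apply: (le_trans Oiff (iD.1 _ h0)); exact: meet_l.
  exists (exist _ cs Hcs) => s Cs; apply/asboolP => /=.
  by apply: cslb; exists s.
move=> [a Ha] amin.
have aK : forall K, KK K -> K a.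
  move=> K0 KK0; apply: contrapT => nK0.
  have [[F0 [fF0 eK0]] _] := KK0.
  have nH : forall x, F0 x -> exists K, KK K /\
      forall w, K w -> A w -> ~ le w (meet a x).
    move=> x Fx; apply: contrapT => hn.
    have Hm : H (meet a x).
      move=> K KK_K; apply: contrapT => h1; apply: hn; exists K; split => // w Kw Aw wm.
      by apply: h1; exists w.
    have := amin (exist _ (meet a x) Hm); move=> /(_ (introT (asboolP _) (@meet_l a x))).
    move=> [] eam; apply: nK0; rewrite eK0; exists x => //=.
    by rewrite -eam; exact: meet_r.
  have : exists K, KK K /\ forall w, K w -> A w -> forall x, F0 x -> ~ le w (meet a x).
    suff gen : forall G, finite_set G -> G `<=` F0 -> exists K, KK K /\
        forall w, K w -> A w -> forall x, G x -> ~ le w (meet a x) by exact: gen.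
    apply: finite_ind.
      by move=> _; exists setT; split.
    move=> G x0 _ IH hG.
    have [K1 [KK1 h1]] := IH (fun z Gz => hG z (or_intror Gz)).
    have [K2 [KK2 h2]] := nH x0 (hG x0 (or_introl erefl)).
    exists (K1 `&` K2); split; first exact: KI.
    move=> w [K1w K2w] Aw z [->|Gz]; first exact: h2.
    exact: h1.
  move=> [K [KK_K hK]].
  have [w [[Kw K0w] Aw wa]] := Ha (K `&` K0) (KI _ _ KK_K KK0).
  move: K0w; rewrite eK0 => -[x Fx wx].
  by apply: (hK w Kw Aw x Fx); apply: meet_glb.
have ay : le a y.
  apply/(le_iff Oiff) => r Par; apply: contrapT => nPy.
  have icD : inverse_closed O (D1 r).
    exists [set D1 r]; split.
      by move=> V ->; split; [exact: open_D1|exact: qc_D1].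
    by apply/seteqP; split => z; [move=> h V ->|move=> /(_ (D1 r) erefl)].
  have [G' [hG' eD]] := (c4 _).1 icD.
  have : D1 r a.
    rewrite eD => K GK; apply: aK; split; first exact: hG'.
    exists r; split => //; rewrite eD => z hz; exact: hz.
  by apply.
have [w [_ Aw wa]] := Ha setT KT.
exact: (Aup a y (Aup w a Aw wa) ay).
Qed.

End CL.
End Spec5.

Local Close Scope ring_scope.

Theorem proposition3p6 (X : Type) (O : set (set X)) :
  spectral O ->
  let le := spec_le O in
  let c1 := locally_with_maximum O in
  let c2 := forall U : set X, O U <-> scott_open_dual le U in
  let c3 := forall U : set X, O U -> quasi_compact O U ->
              finite_set (maximal_elements le U) in
  let c4 := forall C : set X, inverse_closed O C <-> down_subbasis_closed le C in
  [/\ c1 -> c2, c2 -> c3, c3 -> c4 &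
      complete_lattice le -> (c2 <-> c3) /\ (c3 <-> c4)].
Proof.
move=> [R [f [[g fK gK] fO]]] le c1 c2 c3 c4.
pose P := fun x => sval (f x).
have Pprime : forall x, prime_ideal (P x) by move=> x; exact: (svalP (f x)).
have Pinj : injective P.
  move=> x y hxy; rewrite -(fK x) -(fK y); congr g.
  by move: hxy; rewrite /P; case: (f x) => a ha; case: (f y) => b hb /= e; apply: eq_exist.
have Psurj : forall Q, prime_ideal Q -> exists x, P x = Q.
  by move=> Q hQ; exists (g (exist _ Q hQ)); rewrite /P gK.
have Oiff : forall U, O U <-> exists S : set R, U = [set z | ~ (S `<=` P z)].
  move=> U; rewrite fO; split.
  - move=> [S hS]; exists S; apply/seteqP; split => z.
      move=> Uz; have : (f @` U) (f z) by exists z.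
      by rewrite hS.
    move=> /= nS; have : [set p : Spec R | ~ (S `<=` sval p)] (f z) by [].
    by rewrite -hS => -[u Uu /(can_inj fK) <-].
  - move=> [S hS]; exists S; apply/seteqP; split => p.
      by move=> [z Uz <-]; move: Uz; rewrite hS.
    move=> /= nS; exists (g p); last exact: gK.
    by rewrite hS /P /= gK.
have h12 : c1 -> c2 by move=> h1; exact: (c1c2 Pprime Psurj Oiff h1).
have h23 : c2 -> c3 by move=> h2; exact: (c2c3 Pprime Psurj Oiff h2).
have h34 : c3 -> c4 by move=> h3; exact: (c3c4 Pprime Pinj Psurj Oiff h3).
split => // cl.
have h42 : c4 -> c2 by move=> h4; exact: (c4c2 Pprime Pinj Psurj Oiff cl h4).
by split; split => [h|h]; [exact: h23|exact: h42 (h34 h)|exact: h34|exact: h23 (h42 h)].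
Qed.
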